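(* Let $\{\mathsf{P}_\theta : \theta \in \mathbb{T}\}$ be a statistical model for data $Y$ taking values in $\mathbb{Y}$, with likelihood $\theta \mapsto L_y(\theta)$ and maximum likelihood estimator $\hat\theta_y$ existing for each $y$. Let $R(y,\theta) = L_y(\theta)/L_y(\hat\theta_y)$, let $\pi_y(\theta) = \mathsf{P}_\theta\{R(Y,\theta) \le R(y,\theta)\}$, and define $\overline{\Pi}_y(H) = \sup_{\theta \in H} \pi_y(\theta)$ and $\underline{\Pi}_y(H) = 1 - \overline{\Pi}_y(H^c)$ for $H \subseteq \mathbb{T}$. Then the following uniform validity property holds: \[ \sup_{\Theta \in \mathbb{T}} \mathsf{P}_\Theta\Big( \bigcup_{H \subseteq \mathbb{T}:\, H \ni \Theta} \{ \overline{\Pi}_Y(H) \le \alpha \} \Big) \le \alpha, \quad \alpha \in [0,1], \] i.e., the probability that $\overline{\Pi}_Y(H) \le \alpha$ for some true hypothesis $H \ni \Theta$ is at most $\alpha$. Equivalently, \[ \sup_{\Theta \in \mathbb{T}} \mathsf{P}_\Theta\Big( \bigcup_{H \subseteq \mathbb{T}:\, H \not\ni \Theta} \{ \underline{\Pi}_Y(H) \ge 1-\alpha \} \Big) \le \alpha, \quad \alpha \in [0,1], \] i.e., the probability that $\underline{\Pi}_Y(H) \ge 1-\alpha$ for some false hypothesis $H \not\ni \Theta$ is at most $\alpha$.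
   Context: Here $\Theta$ denotes the true parameter value and $Y \sim \mathsf{P}_\Theta$. The pair $(\underline{\Pi}_y, \overline{\Pi}_y)$ is the necessity–possibility measure pair (the inferential model output) determined by the possibility contour $\pi_y$; the union is over all subsets $H$ of the parameter space $\mathbb{T}$ satisfying the stated membership condition. *)

(* Defs.v *)
From HB Require Import structures.
From mathcomp Require Import all_boot all_order all_algebra.
From mathcomp Require Import all_classical all_reals all_analysis.
Set Implicit Arguments. Unset Strict Implicit. Unset Printing Implicit Defensive.
Import Order.TTheory GRing.Theory Num.Theory.
Local Open Scope classical_set_scope.
Local Open Scope ring_scope.
Local Open Scope ereal_scope.

Section IM.
Context {d : measure_display} {Y : measurableType d} {R : realType} {T : Type}.

Definition rel_lik (L : Y -> T -> R) (thetahat : Y -> T) (y : Y) (t : T) : R :=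
  (L y t / L y (thetahat y))%R.

Definition contour (P : T -> probability Y R) (L : Y -> T -> R)
  (thetahat : Y -> T) (y : Y) (t : T) : \bar R :=
  P t [set y' | (rel_lik L thetahat y' t <= rel_lik L thetahat y t)%R].

(* upper possibility Π̄_y(H) = sup_{θ ∈ H} π_y(θ), with sup ∅ = 0 *)
Definition upper_poss P L thetahat (y : Y) (H : set T) : \bar R :=
  ereal_sup ([set 0] `|` [set contour P L thetahat y t | t in H]).

Definition lower_nec P L thetahat (y : Y) (H : set T) : \bar R :=
  1 - upper_poss P L thetahat y (~` H).

End IM.

(* Main.v *)
Require Import Defs.
Set Warnings "-all".
From HB Require Import structures.
From mathcomp Require Import all_boot all_order all_algebra.
From mathcomp Require Import all_classical all_reals all_analysis.
From mathcomp Require Import lra.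
Import Order.TTheory GRing.Theory Num.Theory.
Local Open Scope classical_set_scope.
Local Open Scope ring_scope.
Local Open Scope ereal_scope.

Lemma pit (d : measure_display) (Y : measurableType d) (R : realType)
  (Pr : probability Y R) (S : Y -> R) (a : R) :
  measurable_fun setT S -> (0 <= a)%R ->
  Pr [set y | Pr [set y' | (S y' <= S y)%R] <= a%:E] <= a%:E.
Proof.
move=> mS a0.
set F := fun s : R => Pr [set y' | (S y' <= s)%R].
set A := [set y | _ <= _].
have Fm : forall s, measurable [set y' | (S y' <= s)%R].
  move=> s; have := mS measurableT _ (measurable_itv `]-oo, s]).
  rewrite setTI; congr measurable; apply/seteqP; split => y /=;
    by rewrite in_itv /= ?andbT.
have Fmono : forall s t, (s <= t)%R -> F s <= F t.
  move=> s t st; apply: le_measure; rewrite ?inE; try exact: Fm.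
  by move=> y /= h; exact: le_trans h st.
have key : forall s : nat -> R, {homo s : n m / (n <= m)%N >-> (n <= m)%R} ->
    (forall n, F (s n) <= a%:E) ->
    (forall y, F (S y) <= a%:E -> exists n, (S y <= s n)%R) -> Pr A <= a%:E.
  move=> s sh sF scov.
  have -> : A = \bigcup_n [set y | (S y <= s n)%R].
    apply/seteqP; split => y /=.
      by move=> /scov [n hn]; exists n.
    by move=> [n _ hn]; apply: le_trans (sF n); exact: Fmono.
  have mU : measurable (\bigcup_n [set y | (S y <= s n)%R]).
    by apply: bigcup_measurable => n _; exact: Fm.
  have cv := nondecreasing_cvg_mu (mu := Pr) (fun n => Fm (s n)) mU
     (fun n m nm => introT (subsetPset _ _) (fun y (h : (S y <= s n)%R) => le_trans h (sh _ _ nm))).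
  rewrite -(cvg_lim _ cv) //; apply: lime_le; first by apply/cvg_ex; eexists; exact: cv.
  by near=> n; exact: sF.
case: (pselect (exists y, A y)) => [[y0 Ay0]|nA]; last first.
  rewrite (_ : A = set0) ?measure0 ?lee_fin //.
  by apply/seteqP; split => y // Ay; apply: nA; exists y.
set V := S @` A.
case: (pselect (has_ubound V)) => hub.
  have hs : has_sup V by split => //; exists (S y0), y0.
  case: (pselect (V (sup V))) => [[y1 Ay1 e]|nVc].
    apply: (key (fun=> S y1)) => //; try by move=> *.
    move=> y Ay; exists 0%N; rewrite /= e; apply: sup_upper_bound hs _ _.
    by exists y.
  apply: (key (fun n => sup V - n.+1%:R^-1)%R).
  - move=> n m nm; rewrite lerD2l lerN2 lef_pV2 ?posrE ?ler_nat //.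
  - move=> n; have hp : (0 < n.+1%:R^-1 :> R)%R by rewrite invr_gt0.
    have [v [y Ay <-] lt] := sup_adherent hp hs.
    exact: le_trans (Fmono _ _ (ltW lt)) Ay.
  - move=> y Ay.
    have le1 : (S y <= sup V)%R by apply: sup_upper_bound hs _ _; exists y.
    have lt1 : (S y < sup V)%R.
      rewrite lt_neqAle le1 andbT; apply/eqP => e; apply: nVc; rewrite -e.
      by exists y.
    have [k hk] := ltr_add_invr lt1; exists k.
    by rewrite lerBrDr ltW.
apply: (key (fun n => n%:R)).
- by move=> n m nm; rewrite ler_nat.
- move=> n; case: (pselect (exists2 v, V v & (n%:R < v)%R)) => [[v [y Ay <-] lt]|h].
    exact: le_trans (Fmono _ _ (ltW lt)) Ay.
  exfalso; apply: hub; exists n%:R => v Vv; rewrite leNgt; apply/negP => lt.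
  by apply: h; exists v.
- move=> y _; exists (Num.bound `|S y|).
  exact: le_trans (ler_norm _) (ltW (archi_boundP _)).
Unshelve. all: by end_near. Qed.

Section Aux.
Context {d : measure_display} {Y : measurableType d} {R : realType} {T : Type}.
Variables (P : T -> probability Y R) (L : Y -> T -> R) (th : Y -> T).

Lemma up_ge_contour y (H : set T) t : H t ->
  contour P L th y t <= upper_poss P L th y H.
Proof. by move=> Ht; apply: ereal_sup_ubound; right; exists t. Qed.

Lemma up_ge0 y H : 0 <= upper_poss P L th y H.
Proof. by apply: ereal_sup_ubound; left. Qed.


Lemma up_single y t a : (0 <= a)%R -> contour P L th y t <= a%:E ->
  upper_poss P L th y [set t] <= a%:E.
Proof.
by move=> a0 ct; apply: ge_ereal_sup => _ [->|[t' /= -> <-]] //; rewrite lee_fin.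
Qed.
End Aux.

Theorem corollary2 (d : measure_display) (Y : measurableType d) (R : realType)
  (T : Type) (P : T -> probability Y R)
  (mu : {measure set Y -> \bar R}) (L : Y -> T -> R) (thetahat : Y -> T) :
  (* L is the likelihood: density of P_θ w.r.t. the dominating measure mu *)
  (forall y t, (0 <= L y t)%R) ->
  (forall t, measurable_fun setT (fun y => L y t)) ->
  (forall t A, measurable A -> P t A = \int[mu]_(y in A) (L y t)%:E) ->
  (* thetahat is a maximum likelihood estimator *)
  (forall y t, (L y t <= L y (thetahat y))%R) ->
  (* the relative likelihood statistic is measurable for each θ *)
  (forall t, measurable_fun setT (fun y => rel_lik L thetahat y t)) ->
  forall alpha : R, (0 <= alpha <= 1)%R ->
    ereal_sup [set P Th [set y | exists H : set T,
                   H Th /\ upper_poss P L thetahat y H <= alpha%:E] | Th in setT]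
      <= alpha%:E
    /\
    ereal_sup [set P Th [set y | exists H : set T,
                   ~ H Th /\ lower_nec P L thetahat y H >= (1 - alpha)%:E] | Th in setT]
      <= alpha%:E.
Proof.
move=> _ _ _ _ mrel alpha /andP[a0 a1].
split; apply: ge_ereal_sup => _ [Th _ <-].
  rewrite (_ : [set y | _] = [set y | contour P L thetahat y Th <= alpha%:E]).
    exact: (@pit _ _ _ (P Th) (fun y => rel_lik L thetahat y Th) alpha (mrel Th) a0).
  apply/seteqP; split => y /=.
    by move=> [H [HTh hle]]; exact: le_trans (up_ge_contour P L thetahat y H Th HTh) hle.
  by move=> ct; exists [set Th]; split => //; exact: up_single P L thetahat y Th alpha a0 ct.
rewrite (_ : [set y | _] = [set y | contour P L thetahat y Th <= alpha%:E]).
  exact: (@pit _ _ _ (P Th) (fun y => rel_lik L thetahat y Th) alpha (mrel Th) a0).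
apply/seteqP; split => y /=.
  move=> [H [nHTh hle]].
  have HcTh : (~` H) Th by [].
  apply: le_trans (up_ge_contour P L thetahat y (~` H) Th HcTh) _.
  move: hle; rewrite /lower_nec.
  have := up_ge0 P L thetahat y (~` H).
  case: (upper_poss P L thetahat y (~` H)) => [r| |] //.
  move=> r0; rewrite -[X in _ <= X -> _]/((1 - r)%:E) !lee_fin => h; lra.
move=> ct; exists (~` [set Th]); split; first by move=> h; apply: h.
rewrite /lower_nec setCK.
have := up_single P L thetahat y Th alpha a0 ct.
have := up_ge0 P L thetahat y [set Th].
case: (upper_poss P L thetahat y [set Th]) => [r| |] //.
move=> r0 h; rewrite -[X in _ <= X]/((1 - r)%:E) lee_fin; rewrite lee_fin in h; by rewrite lerD2l lerN2.
Qed.
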